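(* Let $d\ge 1$, $T\ge 1$, let $\mathcal{X}\subseteq\mathbb{R}^d$ be a non-empty closed convex set containing $\mathbf{0}$ with finite diameter $D=\max_{x,y\in\mathcal{X}}\|x-y\|$, and let $0<\mu\le L$. Let $f_1,\dots,f_T:\mathcal{X}\to[0,\infty)$ be differentiable functions such that, for every $t$ and all $x,y\in\mathcal{X}$, $\frac{\mu}{2}\|y-x\|^2\le f_t(y)-f_t(x)-\langle\nabla f_t(x),y-x\rangle\le\frac{L}{2}\|y-x\|^2$, and such that there is a finite constant $G$ with $\max_{x\in\mathcal{X}}\|\nabla f_t(x)\|=G$ for all $t$. Let $x_0=\mathbf{0}$. Then the OMGD algorithm with $K=\lceil\frac{L+\mu}{2\mu}\ln4\rceil$ satisfies $$C_{\mathcal{A}_o}-C_{\mathsf{OPT}}\le\Big(2G+D\Big(10-\frac{\mu}{2(\mu+4)}\Big)\Big)(\|x_1^\star\|+\mathcal{P}_T^\star).$$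
   Context: $x_t^\star=\arg\min_{x\in\mathcal{X}}f_t(x)$, $\mathcal{P}_T^\star=\sum_{t=2}^T\|x_t^\star-x_{t-1}^\star\|$. Quadratic-switching cost of $(y_1,\dots,y_T)\in\mathcal{X}^T$ with $y_0=x_0$: $\sum_{t=1}^T\big(f_t(y_t)+\frac12\|y_t-y_{t-1}\|^2\big)$; $C_{\mathsf{OPT}}$ is its minimum over $\mathcal{X}^T$. OMGD with parameter $K$: $x_1=x_0$; for $t=2,\dots,T$, $z_t^{(0)}=x_{t-1}$, $z_t^{(k)}=\Pi_{\mathcal{X}}\big(z_t^{(k-1)}-\frac1L\nabla f_{t-1}(z_t^{(k-1)})\big)$ ($k=1,\dots,K$), $x_t=z_t^{(K)}$, where $\Pi_{\mathcal{X}}$ is Euclidean projection onto $\mathcal{X}$. $C_{\mathcal{A}_o}$ is the quadratic-switching cost of $(x_1,\dots,x_T)$. *)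

(* Defs.v *)
From HB Require Import structures.
From mathcomp Require Import all_boot all_order all_algebra.
From mathcomp Require Import all_classical all_reals all_analysis.
Set Implicit Arguments. Unset Strict Implicit. Unset Printing Implicit Defensive.
Import Order.TTheory GRing.Theory Num.Theory.
Import numFieldNormedType.Exports.
Local Open Scope classical_set_scope.
Local Open Scope ring_scope.

Section Defs.
Variables (R : realType) (d : nat).
Notation vec := 'rV[R]_d.

(* Euclidean inner product and Euclidean norm on R^d
   (the library norm on 'rV is the sup norm, so we define these explicitly). *)
Definition dotv (u v : vec) : R := \sum_(i < d) u ord0 i * v ord0 i.
Definition enorm (u : vec) : R := Num.sqrt (dotv u u).

Definition grad (f : vec -> R) (x : vec) : vec :=
  \row_(i < d) ('D_(delta_mx ord0 i : vec) f x).

Definition is_proj (X : set vec) (x y : vec) : Prop :=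
  X y /\ forall w, X w -> enorm (x - y) <= enorm (x - w).

Definition qs_cost (f : nat -> vec -> R) (x0 : vec) (T : nat) (y : nat -> vec) : R :=
  \sum_(1 <= t < T.+1)
     (f t (y t) + 2^-1 * enorm (y t - (if t == 1%N then x0 else y t.-1)) ^+ 2).

Definition omgd_traj (X : set vec) (f : nat -> vec -> R) (L : R) (K : nat)
    (x0 : vec) (T : nat) (x : nat -> vec) : Prop :=
  x 1%N = x0 /\
  forall t, (2 <= t <= T)%N ->
    exists z : nat -> vec,
      [/\ z 0%N = x t.-1,
          (forall k, (k < K)%N ->
             is_proj X (z k - L^-1 *: grad (f t.-1) (z k)) (z k.+1))
        & x t = z K].

Definition path_len (xs : nat -> vec) (T : nat) : R :=
  \sum_(2 <= t < T.+1) enorm (xs t - xs t.-1).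

End Defs.

(* Main.v *)
Require Import Defs.
From HB Require Import structures.
From mathcomp Require Import all_boot all_order all_algebra.
From mathcomp Require Import all_classical all_reals all_analysis.
From mathcomp Require Import ring lra.
Import Order.TTheory GRing.Theory Num.Theory.
Import numFieldNormedType.Exports.
Local Open Scope classical_set_scope.
Local Open Scope ring_scope.

Set Implicit Arguments. Unset Strict Implicit.
Section H.
Variables (R : realType) (d : nat).
Notation vec := 'rV[R]_d.
Implicit Types u v w : vec.

Lemma dotvC u v : dotv u v = dotv v u.
Proof. by apply: eq_bigr => i _; rewrite mulrC. Qed.
Lemma dotvDl u v w : dotv (u + v) w = dotv u w + dotv v w.
Proof. by rewrite /dotv -big_split; apply: eq_bigr => i _; rewrite !mxE mulrDl. Qed.
Lemma dotvZl a u w : dotv (a *: u) w = a * dotv u w.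
Proof. by rewrite /dotv mulr_sumr; apply: eq_bigr => i _; rewrite !mxE mulrA. Qed.
Lemma dotvNl u w : dotv (- u) w = - dotv u w.
Proof. by rewrite -scaleN1r dotvZl mulN1r. Qed.
Lemma dotvBl u v w : dotv (u - v) w = dotv u w - dotv v w.
Proof. by rewrite dotvDl dotvNl. Qed.
Lemma dotvDr u v w : dotv w (u + v) = dotv w u + dotv w v.
Proof. by rewrite dotvC dotvDl !(dotvC w). Qed.
Lemma dotvBr u v w : dotv w (u - v) = dotv w u - dotv w v.
Proof. by rewrite dotvC dotvBl !(dotvC w). Qed.
Lemma dotvNr u w : dotv w (- u) = - dotv w u.
Proof. by rewrite dotvC dotvNl dotvC. Qed.
Lemma dotvZr a u w : dotv w (a *: u) = a * dotv w u.
Proof. by rewrite dotvC dotvZl dotvC. Qed.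
Lemma dotv_ge0 u : 0 <= dotv u u.
Proof. by apply: sumr_ge0 => i _; rewrite -expr2 sqr_ge0. Qed.
Lemma enorm_ge0 u : 0 <= enorm u.
Proof. exact: sqrtr_ge0. Qed.
Lemma enorm_sq u : enorm u ^+ 2 = dotv u u.
Proof. by rewrite /enorm sqr_sqrtr // dotv_ge0. Qed.
Lemma enormN u : enorm (- u) = enorm u.
Proof. by rewrite /enorm dotvNl dotvNr opprK. Qed.
Lemma enormB u v : enorm (u - v) = enorm (v - u).
Proof. by rewrite -enormN opprB. Qed.
Lemma enorm_le u v : (enorm u <= enorm v) = (dotv u u <= dotv v v).
Proof. by rewrite /enorm ler_sqrt // dotv_ge0. Qed.

Lemma small_le0 (a b : R) : 0 <= b -> (forall s, 0 < s -> s <= 1 -> a <= s * b) -> a <= 0.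
Proof.
move=> b0 H; rewrite leNgt; apply/negP => a0.
have ab : 0 < a + b by lra.
have s0 : 0 < a / (a + b) by rewrite divr_gt0.
have s1 : a / (a + b) <= 1 by rewrite ler_pdivrMr // mul1r; lra.
have := H _ s0 s1.
rewrite mulrAC ler_pdivlMr // => h.
have : a * (a + b) <= a * b by [].
nra.
Qed.

Lemma small_le0' (a c : R) : 0 <= c -> (forall l, 0 < l -> 2 * l * a <= c) -> a <= 0.
Proof.
move=> c0 H; apply: (@small_le0 _ (c / 2)); first by rewrite divr_ge0.
move=> s s0 s1; have si : 0 < s^-1 by rewrite invr_gt0.
have := H _ si => h.
have e : s * s^-1 = 1 by rewrite mulfV // gt_eqF.
have h2 : s * (2 * s^-1 * a) <= s * c by rewrite ler_pM2l.
have ee : s * (2 * s^-1 * a) = 2 * a * (s * s^-1) by ring.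
have : 2 * a <= s * c by rewrite ee e mulr1 in h2.
lra.
Qed.

Lemma CS u v : dotv u v <= enorm u * enorm v.
Proof.
have key : forall u v, forall l, 0 < l -> 2 * l * dotv u v <= l ^+ 2 * dotv u u + dotv v v.
  move=> u' v' l l0; have := dotv_ge0 (l *: u' - v').
  rewrite !dotvBl !dotvBr !dotvZl !dotvZr (dotvC v' u'); nra.
have [u0|u0] := eqVneq (enorm u) 0.
  rewrite u0 mul0r.
  have uu : dotv u u = 0 by rewrite -enorm_sq u0 expr2 mul0r.
  apply: (@small_le0' _ (dotv v v)); first exact: dotv_ge0.
  move=> l l0; have := key u v l l0; rewrite uu mulr0 add0r //.
have un : 0 < enorm u by rewrite lt_neqAle eq_sym u0 enorm_ge0.
have [v0|v0] := eqVneq (enorm v) 0.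
  rewrite v0 mulr0 dotvC.
  have vv : dotv v v = 0 by rewrite -enorm_sq v0 expr2 mul0r.
  apply: (@small_le0' _ (dotv u u)); first exact: dotv_ge0.
  move=> l l0; have := key v u l l0; rewrite vv mulr0 add0r //.
have vn : 0 < enorm v by rewrite lt_neqAle eq_sym v0 enorm_ge0.
set l := enorm v / enorm u.
have l0 : 0 < l by rewrite divr_gt0.
have := key u v l l0.
rewrite -!enorm_sq => h.
have e : l * enorm u = enorm v by rewrite /l mulfVK // gt_eqF.
have h' : 2 * l * dotv u v <= 2 * l * (enorm u * enorm v).
  apply: (le_trans h).
  have E : l ^+ 2 * enorm u ^+ 2 + enorm v ^+ 2 = 2 * l * (enorm u * enorm v) by rewrite -e; ring.
  by rewrite E.
have p : 0 < 2 * l by rewrite mulr_gt0.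
by rewrite ler_pM2l in h'.
Qed.

Lemma enorm_tri u v : enorm (u + v) <= enorm u + enorm v.
Proof.
rewrite -(ler_pXn2r (_ : (0 < 2)%N)) ?nnegrE ?addr_ge0 ?enorm_ge0 //.
rewrite enorm_sq dotvDl !dotvDr (dotvC v u) sqrrD -!enorm_sq.
have := CS u v; lra.
Qed.

Lemma conv_pt {X : set vec} {u v s} : @convex_set R vec X -> X u -> X v -> 0 <= s -> s <= 1 ->
  X (u + s *: (v - u)).
Proof.
move=> cX Xu Xv s0 s1.
have := cX v u (Itv01 s0 s1); rewrite !inE => /(_ Xv Xu).
congr X.
change (s *: v + (1 - s) *: u = u + s *: (v - u)).
rewrite scalerBr scalerBl scale1r.
by rewrite addrCA.
Qed.

Lemma proj_vi (X : set vec) z p w : @convex_set R vec X -> is_proj X z p -> X w ->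
  dotv (z - p) (w - p) <= 0.
Proof.
move=> cX [Xp Hp] Xw.
apply: (@small_le0 _ (dotv (w - p) (w - p) / 2)); first by rewrite divr_ge0 ?dotv_ge0.
move=> s s0 s1.
have := Hp _ (conv_pt cX Xp Xw (ltW s0) s1).
rewrite enorm_le.
have -> : z - (p + s *: (w - p)) = (z - p) - s *: (w - p) by rewrite opprD addrA.
move: (z - p) (w - p) => a b.
rewrite !dotvBl !dotvBr !dotvZl !dotvZr (dotvC b a) => h.
have h2 : 2 * s * dotv a b <= s * s * dotv b b by lra.
have h3 : s * (2 * dotv a b) <= s * (s * dotv b b).
  by move: h2; rewrite !mulrA [s * 2]mulrC.
rewrite ler_pM2l // in h3.
lra.
Qed.

Lemma opt_cond (X : set vec) (f : vec -> R) (g xs w : vec) (L : R) :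
  @convex_set R vec X -> X xs -> (forall u, X u -> f xs <= f u) -> 0 <= L ->
  (forall v, X v -> f v - f xs - dotv g (v - xs) <= L / 2 * enorm (v - xs) ^+ 2) ->
  X w -> 0 <= dotv g (w - xs).
Proof.
move=> cX Xxs Hmin L0 Hup Xw.
rewrite -oppr_le0.
apply: (@small_le0 _ (L / 2 * dotv (w - xs) (w - xs))); first by rewrite mulr_ge0 ?divr_ge0 ?dotv_ge0.
move=> s s0 s1.
have Xq := conv_pt cX Xxs Xw (ltW s0) s1.
have := Hup _ Xq; have := Hmin _ Xq.
have -> : xs + s *: (w - xs) - xs = s *: (w - xs) by rewrite addrC addKr.
rewrite enorm_sq dotvZl dotvZr dotvZr => h1 h2.
have h3 : s * (- dotv g (w - xs)) <= s * (s * (L / 2 * dotv (w - xs) (w - xs))).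
  have e : L / 2 * (s * (s * dotv (w - xs) (w - xs))) = s * (s * (L / 2 * dotv (w - xs) (w - xs))) by ring.
  rewrite -e; lra.
by rewrite ler_pM2l // in h3.
Qed.

Lemma step_contr (f : vec -> R) (g gs x xp xs : vec) (L mu : R) :
  0 < mu -> mu <= L ->
  mu / 2 * enorm (xs - x) ^+ 2 <= f xs - f x - dotv g (xs - x) ->
  f xp - f x - dotv g (xp - x) <= L / 2 * enorm (xp - x) ^+ 2 ->
  mu / 2 * enorm (xp - xs) ^+ 2 <= f xp - f xs - dotv gs (xp - xs) ->
  0 <= dotv gs (xp - xs) ->
  dotv (x - L^-1 *: g - xp) (xs - xp) <= 0 ->
  (L + mu) * dotv (xp - xs) (xp - xs) <= (L - mu) * dotv (x - xs) (x - xs).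
Proof.
move=> mu0 muL h1 h2 h3 h4 h5.
have L0 : 0 < L by apply: lt_le_trans muL.
have e1 : xs - x = - (x - xs) by rewrite opprB.
have e2 : xp - x = (xp - xs) - (x - xs) by rewrite opprB addrA subrK.
have e3 : x - L^-1 *: g - xp = ((x - xs) - (xp - xs)) - L^-1 *: g.
  by rewrite opprB addrA subrK addrAC.
have e4 : xs - xp = - (xp - xs) by rewrite opprB.
rewrite e1 enorm_sq in h1; rewrite e2 enorm_sq in h2; rewrite enorm_sq in h3.
rewrite e3 e4 in h5.
move: h1 h2 h3 h4 h5; move: (x - xs) (xp - xs) => a b.
rewrite ?dotvNl ?dotvNr ?dotvBl ?dotvBr ?dotvNl ?dotvNr ?dotvZl ?dotvZr ?dotvNl ?dotvNr (dotvC b a) => h1 h2 h3 h4 h5.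
have h6 : 0 <= L * (dotv a b - dotv b b - L^-1 * dotv g b) by apply: mulr_ge0; lra.
rewrite mulrBr mulrBr mulrA mulfV ?gt_eqF // mul1r in h6.
nra.
Qed.

Lemma rate (L mu : R) (K : nat) : 0 < mu -> mu <= L ->
  (K : int) = Num.ceil ((L + mu) / (2 * mu) * ln 4) ->
  (1 <= K)%N /\ ((L - mu) / (L + mu)) ^+ K <= 4^-1.
Proof.
move=> mu0 muL hK.
have Lmu : 0 < L + mu by lra.
have ln4 : 0 < ln (4 : R) by apply: ln_gt0; lra.
have x0 : 0 < (L + mu) / (2 * mu) * ln 4 by rewrite mulr_gt0 // divr_gt0 // mulr_gt0.
have hKR : (L + mu) / (2 * mu) * ln 4 <= K%:R.
  by have := ceil_ge ((L + mu) / (2 * mu) * ln 4); rewrite -hK.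
split.
  case: K hK hKR => [|K'] // _; rewrite /= => h; lra.
set c := 2 * mu / (L + mu).
have c0 : 0 <= c by rewrite /c divr_ge0 //; lra.
have qe : (L - mu) / (L + mu) = 1 - c.
  have Ln : L + mu != 0 by rewrite gt_eqF.
  by rewrite /c; field.
have q0 : 0 <= 1 - c by rewrite -qe divr_ge0 //; lra.
rewrite qe.
apply: (le_trans (y := expR (- c) ^+ K)).
  apply: lerXn2r; rewrite ?nnegrE ?expR_ge0 //.
  by have := expR_ge1Dx (- c); lra.
rewrite -expRM_natl.
have h4 : ln 4 <= K%:R * c.
  have : (L + mu) / (2 * mu) * ln 4 * c <= K%:R * c by rewrite ler_wpM2r.
  have -> : (L + mu) / (2 * mu) * ln 4 * c = ln 4.
    have Ln : L + mu != 0 by rewrite gt_eqF.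
    have mn : mu != 0 by rewrite gt_eqF.
    by rewrite /c; field; rewrite Ln mn.
  by [].
apply: (le_trans (y := expR (- ln 4))).
  by rewrite ler_expR mulrN lerN2.
by rewrite expRN lnK // posrE.
Qed.

Lemma inner_loop (X : set vec) (f : vec -> R) (L mu : R) (K : nat) (z : nat -> vec) (xs : vec) :
  @convex_set R vec X -> 0 < mu -> mu <= L ->
  (forall u v, X u -> X v ->
     mu / 2 * enorm (v - u) ^+ 2 <= f v - f u - dotv (grad f u) (v - u)
     /\ f v - f u - dotv (grad f u) (v - u) <= L / 2 * enorm (v - u) ^+ 2) ->
  X xs -> (forall u, X u -> f xs <= f u) ->
  X (z 0%N) ->
  (forall k, (k < K)%N -> is_proj X (z k - L^-1 *: grad f (z k)) (z k.+1)) ->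
  forall k, (k <= K)%N -> X (z k) /\
    dotv (z k - xs) (z k - xs) <= ((L - mu) / (L + mu)) ^+ k * dotv (z 0%N - xs) (z 0%N - xs).
Proof.
move=> cX mu0 muL HB Xxs Hmin Xz0 Hp.
have L0 : 0 < L by apply: lt_le_trans muL.
have Lmu : 0 < L + mu by lra.
elim=> [|k IH] hk; first by rewrite expr0 mul1r.
have [Xk Hk] := IH (ltnW hk).
have [Xk1 _] := Hp k hk.
split => //.
have h5 := proj_vi cX (Hp k hk) Xxs.
have h4 := opt_cond (g := grad f xs) cX Xxs Hmin (ltW L0) (fun v Xv => (HB _ _ Xxs Xv).2) Xk1.
have := step_contr mu0 muL (HB _ _ Xk Xxs).1 (HB _ _ Xk Xk1).2 (HB _ _ Xxs Xk1).1 h4 h5.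
move=> h.
have q0 : 0 <= (L - mu) / (L + mu) by rewrite divr_ge0 //; lra.
apply: (le_trans (y := (L - mu) / (L + mu) * dotv (z k - xs) (z k - xs))).
  by rewrite mulrAC ler_pdivlMr // mulrC.
by have := ler_wpM2l q0 Hk; rewrite exprS mulrA.
Qed.
End H.
Unset Implicit Arguments. Set Strict Implicit.

Theorem corollary1 (R : realType) (d T : nat) (X : set 'rV[R]_d)
  (D mu L G : R) (f : nat -> 'rV[R]_d -> R) (K : nat)
  (xs : nat -> 'rV[R]_d) (x : nat -> 'rV[R]_d) (copt : R) :
  (1 <= d)%N -> (1 <= T)%N ->
  closed X -> @convex_set R 'rV[R]_d X -> X 0 ->
  (forall u v, X u -> X v -> enorm (u - v) <= D) ->
  (exists u v, [/\ X u, X v & enorm (u - v) = D]) ->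
  0 < mu -> mu <= L ->
  (forall t, (1 <= t <= T)%N -> forall u, X u -> differentiable (f t) u) ->
  (forall t, (1 <= t <= T)%N -> forall u, X u -> 0 <= f t u) ->
  (forall t, (1 <= t <= T)%N -> forall u v, X u -> X v ->
     mu / 2 * enorm (v - u) ^+ 2 <= f t v - f t u - dotv (grad (f t) u) (v - u)
     /\ f t v - f t u - dotv (grad (f t) u) (v - u) <= L / 2 * enorm (v - u) ^+ 2) ->
  (forall t, (1 <= t <= T)%N ->
     (forall u, X u -> enorm (grad (f t) u) <= G) /\
     exists u, X u /\ enorm (grad (f t) u) = G) ->
  (* xs t is the minimizer x_t^* of f_t over X *)
  (forall t, (1 <= t <= T)%N -> X (xs t) /\ forall u, X u -> f t (xs t) <= f t u) ->
  (* copt = C_OPT is the minimum of the quadratic-switching cost over X^T *)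
  (exists y : nat -> 'rV[R]_d,
     (forall t, (1 <= t <= T)%N -> X (y t)) /\ qs_cost f 0 T y = copt) ->
  (forall y : nat -> 'rV[R]_d,
     (forall t, (1 <= t <= T)%N -> X (y t)) -> copt <= qs_cost f 0 T y) ->
  (K : int) = Num.ceil ((L + mu) / (2 * mu) * ln 4) ->
  omgd_traj X f L K 0 T x ->
  qs_cost f 0 T x - copt <=
    (2 * G + D * (10 - mu / (2 * (mu + 4)))) * (enorm (xs 1%N) + path_len xs T).
Proof.
move=> d1 T1 clX cX X0 HD [u0 [v0 [Xu0 Xv0 Du0]]] mu0 muL Hdiff Hpos HB HG Hxs [y [Xy Hy]] _ hK [Hx1 Htraj].
have L0 : 0 < L by apply: lt_le_trans muL.
have D0 : 0 <= D by rewrite -Du0 enorm_ge0.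
have G0 : 0 <= G.
  have h11 : (1 <= 1 <= T)%N by rewrite T1.
  by have [_ [w [_ <-]]] := HG 1%N h11; rewrite enorm_ge0.
have [K1 qK] := rate mu0 muL hK.
pose E t := enorm (x t - xs t).
pose p t := enorm (xs t - xs t.-1).
pose c t := f t (x t) + 2^-1 * enorm (x t - (if t == 1%N then 0 else x t.-1)) ^+ 2.
pose S n := \sum_(1 <= t < n.+1) E t.
pose P n := \sum_(2 <= t < n.+1) p t.
pose W n := \sum_(1 <= t < n.+1) (c t - f t (xs t)).
have E0 : forall t, 0 <= E t by move=> t; exact: enorm_ge0.
have gap : forall t, (1 <= t <= T)%N -> X (x t) -> f t (x t) - f t (xs t) <= G * E t.
  move=> t ht Xt.
  have [Xxt _] := Hxs t ht.
  have [h1 _] := HB t ht _ _ Xt Xxt.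
  have h2 : 0 <= mu / 2 * enorm (xs t - x t) ^+ 2 by rewrite mulr_ge0 ?divr_ge0 ?sqr_ge0 //; lra.
  have h3 : dotv (grad (f t) (x t)) (x t - xs t) <= G * E t.
    apply: (le_trans (CS _ _)); apply: ler_wpM2r; first exact: E0.
    exact: (HG t ht).1.
  have e : dotv (grad (f t) (x t)) (xs t - x t) = - dotv (grad (f t) (x t)) (x t - xs t).
    by rewrite -dotvNr opprB.
  lra.
have main : forall n, (1 <= n <= T)%N -> [/\ X (x n), S n + E n <= 2 * (E 1%N + P n)
            & W n + 3/4 * D * E n <= (G + 3/4 * D) * S n].
  elim=> [|n IH] //; case: n IH => [|n] IH hn.
    have X1 : X (x 1%N) by rewrite Hx1.
    split => //.
      by rewrite /S /P big_nat1 big_geq // addr0; lra.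
    rewrite /W /S !big_nat1 /c eqxx Hx1 subr0.
    have -> : enorm (0 : 'rV[R]_d) = 0 by rewrite /enorm /dotv big1 ?sqrtr0 // => i _; rewrite mxE mul0r.
    rewrite expr2 mulr0 mulr0 addr0.
    have := gap 1%N hn X1; rewrite Hx1; lra.
  have hn' : (1 <= n.+1 <= T)%N by case/andP: hn => _ h; apply/andP; split => //; apply: ltnW.
  have [Xn HS HW] := IH hn'.
  have h2 : (2 <= n.+2 <= T)%N by case/andP: hn.
  have [z [z0 zp zK]] := Htraj n.+2 h2.
  have [Xxn Hmin] := Hxs n.+1 hn'.
  have Xz0 : X (z 0%N) by rewrite z0.
  have [XzK hzK] := inner_loop cX mu0 muL (HB _ hn') Xxn Hmin Xz0 zp (leqnn K).
  rewrite z0 /= in hzK.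
  rewrite -zK in XzK hzK.
  have d0 : 0 <= dotv (x n.+1 - xs n.+1) (x n.+1 - xs n.+1) by exact: dotv_ge0.
  have hq : enorm (x n.+2 - xs n.+1) <= 2^-1 * E n.+1.
    rewrite -(ler_pXn2r (_ : (0 < 2)%N)) ?nnegrE ?mulr_ge0 ?enorm_ge0 ?invr_ge0 //.
    rewrite enorm_sq exprMn /E enorm_sq.
    apply: (le_trans hzK); apply: ler_wpM2r => //.
    apply: (le_trans qK); rewrite expr2 -invfM -natrM; exact: lexx.
  have hE : E n.+2 <= 2^-1 * E n.+1 + p n.+2.
    rewrite /E /p.
    have -> : x n.+2 - xs n.+2 = (x n.+2 - xs n.+1) + (xs n.+1 - xs n.+2) by rewrite addrA subrK.
    apply: (le_trans (enorm_tri _ _)); rewrite (enormB (xs n.+1)) /=; rewrite /E in hq; lra.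
  have hn2 : (1 <= n.+2 <= T)%N by [].
  have Xn2 : X (x n.+2) by [].
  have hg := gap _ hn2 Xn2.
  have hsw : enorm (x n.+2 - x n.+1) <= 3/2 * E n.+1.
    have -> : x n.+2 - x n.+1 = (x n.+2 - xs n.+1) + (xs n.+1 - x n.+1) by rewrite addrA subrK.
    apply: (le_trans (enorm_tri _ _)); rewrite (enormB (xs n.+1)) -/(E n.+1); lra.
  have hswD : enorm (x n.+2 - x n.+1) <= D by apply: HD.
  have hsw2 : 2^-1 * enorm (x n.+2 - x n.+1) ^+ 2 <= 3/4 * D * E n.+1.
    have e0 := enorm_ge0 (x n.+2 - x n.+1).
    rewrite expr2; nra.
  have Ec : c n.+2 - f n.+2 (xs n.+2) <= G * E n.+2 + 3/4 * D * E n.+1.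
    rewrite /c /=; lra.
  split => //.
    rewrite /S /P big_nat_recr //= [X in _ <= 2 * (_ + X)]big_nat_recr //=.
    rewrite -/(S n.+1) -/(P n.+1).
    have := E0 n.+2; lra.
  rewrite /W /S big_nat_recr //= [X in _ <= _ * X]big_nat_recr //= -/(W n.+1) -/(S n.+1).
  have := E0 n.+2; have := E0 n.+1; nra.
have hT : (1 <= T <= T)%N by rewrite T1 leqnn.
have [_ HS HW] := main T hT.
have Hc : copt >= \sum_(1 <= t < T.+1) f t (xs t).
  rewrite -Hy /qs_cost big_nat_cond [X in _ <= X]big_nat_cond.
  apply: ler_sum => t /andP [/andP [h1 h2] _].
  have ht : (1 <= t <= T)%N by rewrite h1 -ltnS h2.
  have [_ Hm] := Hxs t ht.
  have := Hm _ (Xy t ht).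
  have : 0 <= 2^-1 * enorm (y t - (if t == 1%N then 0 else y t.-1)) ^+ 2.
    by rewrite mulr_ge0 ?sqr_ge0 // invr_ge0.
  lra.
have HWe : W T = qs_cost f 0 T x - \sum_(1 <= t < T.+1) f t (xs t) by rewrite /W sumrB.
have HE1 : E 1%N = enorm (xs 1%N) by rewrite /E Hx1 enormB subr0.
have HP : P T = path_len xs T by [].
have P0 : 0 <= P T by apply: sumr_ge0 => t _; exact: enorm_ge0.
have S0 : 0 <= S T by apply: sumr_ge0 => t _; exact: E0.
have ET := E0 T.
have m4 : mu / (2 * (mu + 4)) <= 2^-1.
  rewrite ler_pdivrMr ?mulr_gt0 //; last by lra.
  have e : 2^-1 * (2 * (mu + 4)) = mu + 4 by rewrite mulrA mulVf ?mul1r.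
  rewrite e; lra.
have k1 : 3/2 <= 10 - mu / (2 * (mu + 4)) by lra.
have k2 : D * (3/2) <= D * (10 - mu / (2 * (mu + 4))) by rewrite ler_wpM2l.
rewrite -HE1 -HP.
have E10 := E0 1%N.
have GD : 0 <= G + 3/4 * D by lra.
have h1 : (G + 3/4 * D) * S T <= (G + 3/4 * D) * (2 * (E 1%N + P T)) by rewrite ler_wpM2l //; lra.
nra.
Qed.
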